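(* Let $p$ be an odd prime, $k$ algebraically closed of characteristic $p$, $d=p^2+1$, and let $X$ be the Artin–Schreier curve $y^p-y=-x^{d}-x^{d/2+p}$ over $k$. For every $\alpha=y^mx^ndx\in\mathcal B_X$ with $m\ge\frac{p-1}{2}$, we have $\mathcal C_X(\alpha)\notin\operatorname{Span}(\mathcal C_X(\mathcal B_\alpha))$.
   Context: $\mathcal C_X$ is the Cartier operator on $H^0(X,\Omega^1_X)$: the $p^{-1}$-semilinear map with $\mathcal C_X(f^p\alpha+\beta)=f\,\mathcal C_X(\alpha)+\mathcal C_X(\beta)$, $\mathcal C_X(x^{p-1}dx)=dx$, $\mathcal C_X(x^ndx)=0$ for $n\not\equiv-1\pmod p$. For an Artin–Schreier curve $y^p-y=f$ with $f\in k[x]$ of degree $D$ prime to $p$, the set $$\mathcal B_X=\left\{y^ix^jdx:\ 0\le i\le p-2,\ 0\le j\le \left\lceil\tfrac{(p-i-1)D}{p}\right\rceil-2\right\}$$ is a $k$-basis of $H^0(X,\Omega^1_X)$. Order $\mathcal B_X$ lexicographically with $y>x$: $y^ix^jdx>y^ax^bdx$ iff $i>a$, or $i=a$ and $j>b$. For $\alpha\in\mathcal B_X$, $\mathcal B_\alpha=\{\beta\in\mathcal B_X:\beta<\alpha\}$, and for a set $A$ of differentials, $\operatorname{Span}(\mathcal C_X(A))$ is the $k$-span of $\{\mathcal C_X(a):a\in A\}$. *)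

(* Defs.v *)
From HB Require Import structures.
From mathcomp Require Import all_boot all_order all_algebra.
Set Implicit Arguments. Unset Strict Implicit. Unset Printing Implicit Defensive.
Import Order.TTheory GRing.Theory Num.Theory.
Local Open Scope ring_scope.

Section Cartier.
Variable k : closedFieldType.

Lemma exists_nth_root (n : nat) (c : k) : (0 < n)%N -> exists r : k, r ^+ n == c.
Proof.
move=> n0; have [r Hr] := @solve_monicpoly k n (fun i => if i == 0%N then c else 0) n0.
exists r; apply/eqP; rewrite Hr (bigD1 (Ordinal n0)) //= big1 ?addr0 ?expr0 ?mulr1 //.
by move=> [[|i] Hi] //=; rewrite mul0r.
Qed.

(* A chosen p-th root; in characteristic p it is the unique one (Frobenius is injective). *)
Definition proot (p : nat) (c : k) : k :=
  match p as q return ((0 < q)%N -> exists r : k, r ^+ q == c) -> k with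
  | 0 => fun _ => c
  | q.+1 => fun H => xchoose (H (ltn0Sn q))
  end (@exists_nth_root p c).

(* Cartier operator on polynomial differentials h(x) dx (p^{-1}-semilinear):
   C(x^(pm+p-1) dx) = x^m dx, C(x^n dx) = 0 for n <> -1 mod p.
   Returns the polynomial g with C(h dx) = g dx. *)
Definition cartier_x (p : nat) (h : {poly k}) : {poly k} :=
  \poly_(m < size h) proot p (h`_(p * m + p.-1)).

(* A differential g(x,y) dx with
   g in k[x,y] of y-degree < p is represented by g : {poly {poly k}}
   (outer variable = y, coefficients in k[x]); k[x,y]/(y^p-y-f) is free over
   k[x] with basis 1,y,...,y^(p-1), so this representation is faithful.
   Cartier operator: using y = y^p - f, y^i = sum_a C(i,a) (y^a)^p (-f)^(i-a), so
   C(y^i g_i(x) dx) = sum_a C(i,a) y^a C((-f)^(i-a) g_i dx). *)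
Definition cartier_AS (p : nat) (f : {poly k}) (g : {poly {poly k}}) : {poly {poly k}} :=
  \sum_(i < size g) \sum_(a < i.+1)
     ('C(i, a))%:R *: ((cartier_x p ((- f) ^+ (i - a) * g`_i))%:P * 'X^a).

Definition mono (i j : nat) : {poly {poly k}} := 'X^i * ('X^j)%:P.

End Cartier.

(* The index set of the basis B_X: y^i x^j dx with 0 <= i <= p-2 and
   0 <= j <= ceil((p-i-1)D/p) - 2. *)
Definition in_basis (p D i j : nat) : bool :=
  (i <= p - 2)%N && (j + 2 <= ((p - i - 1) * D + p - 1) %/ p)%N.

(* lexicographic order with y > x: y^a x^b dx < y^i x^j dx *)
Definition lex_lt (a b i j : nat) : bool := (a < i)%N || ((a == i) && (b < j)%N).

(* Main.v *)
Require Import Defs.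
From HB Require Import structures.
From mathcomp Require Import all_boot all_order all_algebra.
From mathcomp Require Import zify ring.
Import GRing.Theory.

Lemma gen (w m n s i0 D e c : nat) :
  (0 < w)%N -> D = (4*w*w+4*w+2)%N -> e = (2*w*w+4*w+2)%N -> c = (2*w*w)%N ->
  (w <= m)%N -> (s <= m)%N -> (i0 <= 1)%N -> (i0 <= s)%N -> (i0 = 1 -> n < c)%N ->
  (forall i, i <= s -> (s - i) * D + i * e + n = (s - i0) * D + i0 * e + n -> i = i0)%N /\
  (forall a b s' i, (b+2)*(2*w+1) <= (2*w+1 - a - 1)*D + 2*w -> (a < m) || ((a == m) && (b < n)) ->
      a = m - s + s' -> i <= s' -> (s'-i)*D + i*e + b <> (s - i0) * D + i0 * e + n)%N.
Proof.
move=> w0 HD He Hc wm sm i01 i0s Hi0.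
have Dec : D = (e + c)%N by rewrite HD He Hc; lia.
have key : forall j t, (j <= t)%N -> ((t - j) * D + j * e = t * e + (t - j) * c)%N.
  move=> j t jt; rewrite Dec mulnDr addnAC -mulnDl subnK //.
split.
  move=> i iS; rewrite !key // => /eqP; rewrite eqn_add2r eqn_add2l.
  rewrite eqn_pmul2r; last by rewrite Hc; lia.
  move=> /eqP; lia.
move=> a b s' i Hab Hlex Ha is'; rewrite key // key //.
case/orP: Hlex => [am | /andP [/eqP am bn]].
-
  have ss : (s' < s)%N by lia.
  have [k sk] : exists k, s = (s' + 1 + k)%N by exists (s - s' - 1)%N; lia.
  have Hb2 : ((b+2)*(2*w+1) <= (w+1+k) * D + 2*w)%N.
    apply: (leq_trans Hab); rewrite leq_add2r leq_mul2r; apply/orP; right; lia.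
  have Hb3 : (b < k * D + e)%N.
    rewrite ltnNge; apply/negP => H.
    have X : ((k*D + e + 2) * (2*w+1) <= (w+1+k) * D + 2*w)%N.
      apply: leq_trans Hb2; rewrite leq_mul2r; apply/orP; right; lia.
    have T1 : (k * D <= k * D * (2*w+1))%N by rewrite leq_pmulr //; lia.
    rewrite !mulnDl in X.
    have X2 : ((e + 2) * (2*w+1) <= (w+1) * D + 2*w)%N.
      rewrite mulnDl; lia.
    move: X2; rewrite HD He.
    have -> : ((2 * w * w + 4 * w + 2 + 2) * (2 * w + 1) = 4*(w*w*w) + 10*(w*w) + 12*w + 4)%N by ring.
    have -> : ((w + 1) * (4 * w * w + 4 * w + 2) = 4*(w*w*w) + 8*(w*w) + 6*w + 2)%N by ring.
    lia.
  have L1 : ((s' - i) * c <= s' * c)%N by rewrite leq_mul2r; apply/orP; right; lia.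
  have L2 : ((s - 1) * c <= (s - i0) * c)%N by rewrite leq_mul2r; apply/orP; right; lia.
  move=> Heq.
  have : (s' * e + s' * c + b < s * e + (s - 1) * c)%N.
    rewrite sk Dec in Hb3 *.
    have -> : (s' + 1 + k - 1 = s' + k)%N by lia.
    rewrite !mulnDl !mulnDr mul1n in Hb3 *.
    lia.
  lia.
-
  have ss : s' = s by lia.
  subst s'.
  case: (leqP i0 i) => ii.
    have : ((s - i) * c <= (s - i0) * c)%N by rewrite leq_mul2r; apply/orP; right; lia.
    lia.
  have i1 : i0 = 1%N by lia.
  have i00 : i = 0%N by lia.
  subst i; rewrite i1.
  have := Hi0 i1.
  have : ((s - 0) * c = (s - 1) * c + c)%N.
    rewrite subn0 -{1}(subnK (_ : 1 <= s)%N) ?mulnDl ?mul1n //; lia.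
  lia.
Qed.

Lemma cases (w m n : nat) : (0 < w)%N -> (w <= m)%N ->
  ((n+2)*(2*w+1) <= (2*w+1 - m - 1) * (4*w*w+4*w+2) + 2*w)%N ->
  exists s i0 d, [/\ (s <= m)%N, (i0 <= 1)%N, (i0 <= s)%N, (i0 = 1 -> n < 2*w*w)%N &
    ((s - i0) * (4*w*w+4*w+2) + i0 * (2*w*w+4*w+2) + n = (2*w+1) * d + 2*w)%N].
Proof.
move=> w0 wm Hb.
have p0 : (0 < 2*w+1)%N by timeout 15 lia.
have Hqu := divn_eq (n+1) (2*w+1).
have Hu := ltn_pmod (n+1) p0.
move: Hqu Hu; set q := ((n+1) %/ _)%N; set u := ((n+1) %% _)%N => Hqu Hu; clearbody q u.
have Hb' : ((n+2)*(2*w+1) <= w * (4*w*w+4*w+2) + 2*w)%N.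
  apply: leq_trans Hb _; rewrite leq_add2r leq_mul2r; apply/orP; right; timeout 15 lia.
case: (posnP u) => [u0|upos].
  exists 0%N, 0%N, q.-1; split => //.
  case: q Hqu => [|q'] Hq; first by timeout 15 lia.
  rewrite mul0n add0n /=; timeout 15 lia.
case: (leqP u w) => uw.
  have [v Hv] : exists v, w = (u + v)%N by exists (w - u)%N; timeout 15 lia.
  exists (v + 1)%N, 1%N, (q + v * (2*w+1) + w + 1)%N; split; [lia|by []|lia| |].
    move=> _.
    case: (leqP w q) => qw.
      have : (w * (2*w+1) <= q * (2*w+1))%N by rewrite leq_mul2r qw orbT.
      move=> Hqw.
      have H1 : (w*(2*w+1) + 2 <= n + 2)%N by timeout 15 lia.
      have H2 : ((w*(2*w+1) + 2)*(2*w+1) <= (n + 2)*(2*w+1))%N by rewrite leq_mul2r H1 orbT.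
      have H3 := leq_trans H2 Hb'.
      move: H3.
      have -> : ((w * (2 * w + 1) + 2) * (2 * w + 1) = 4*(w*w*w) + 4*(w*w) + 5*w + 2)%N by timeout 15 ring.
      have -> : (w * (4 * w * w + 4 * w + 2) = 4*(w*w*w) + 4*(w*w) + 2*w)%N by timeout 15 ring.
      timeout 15 lia.
    have [w' Hw'] : exists w', w = (w'+1)%N by exists w.-1; timeout 15 lia.
    have qw' : (q <= w')%N by timeout 15 lia.
    have : (q * (2*w+1) <= w' * (2*w+1))%N by rewrite leq_mul2r qw' orbT.
    rewrite Hw'.
    have -> : (w' * (2 * (w'+1) + 1) = 2*(w'*w') + 3*w')%N by ring.
    have -> : (2 * (w'+1) * (w'+1) = 2*(w'*w') + 4*w' + 2)%N by ring.
    rewrite Hw' in Hqu uw; timeout 15 lia.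
  subst w.
  have [u' Hu'] : exists u', u = (u'+1)%N by exists u.-1; timeout 15 lia.
  subst u.
  have En : (n = q * (2*(u'+1+v)+1) + u')%N by timeout 15 lia.
  rewrite En addnK.
  timeout 15 ring.
have [z Hz] : exists z, (2*w+1 = u + z)%N by exists (2*w+1-u)%N; timeout 15 lia.
exists z, 0%N, (q + z * (2*w+1))%N; split; [lia|by []|by []|by []|].
rewrite subn0 mul0n addn0.
have [r Hr] : exists r, (2*w = z + r /\ n = q * (2*w+1) + r)%N by exists (u - 1)%N; timeout 15 lia.
case: Hr => Hr1 Hr2.
have G : (z * (4*w*w+4*w+2) + q * (2*w+1) + r = (2*w+1) * (q + z * (2*w+1)) + (z + r))%N by timeout 15 ring.
rewrite Hr2; timeout 15 lia.
Qed.

Local Open Scope ring_scope.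

Set Implicit Arguments. Unset Strict Implicit.
Section S.
Variable k : closedFieldType.

Lemma prootK (p : nat) (c : k) : (0 < p)%N -> proot p c ^+ p = c.
Proof.
case: p => // q _; rewrite /proot.
move: (exists_nth_root c) => H.
by apply/eqP; apply: (xchooseP (H (ltn0Sn q))).
Qed.

Lemma proot0 (p : nat) : (0 < p)%N -> proot p (0 : k) = 0.
Proof. move=> p0; have := expf_eq0 (proot p (0:k)) p; rewrite prootK // eqxx p0 /=. by move=> /esym/eqP. Qed.

Lemma proot_eq0 (p : nat) (c : k) : (0 < p)%N -> proot p c = 0 -> c = 0.
Proof. move=> p0 H; rewrite -(prootK c p0) H expr0n; by case: (p) p0. Qed.

Lemma coef_cartier_x (p : nat) (h : {poly k}) d : (0 < p)%N ->
  (cartier_x p h)`_d = proot p (h`_(p * d + p.-1)).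
Proof.
move=> p0; rewrite /cartier_x coef_poly; case: ifP => // /negbT; rewrite -leqNgt => hd.
rewrite nth_default ?proot0 //; apply: leq_trans hd _.
case: (p) p0 => // q _. by rewrite mulSn -addnA leq_addr.
Qed.

Lemma coef_mono a b i : (mono k a b)`_i = (i == a)%:R * 'X^b.
Proof. by rewrite /mono coefMC coefXn. Qed.

Lemma aux (Q : {poly k}) (b : bool) n d : ((Q * b%:R) *+ n)`_d = if b then Q`_d *+ n else 0.
Proof. by case: b; rewrite ?mulr1 ?mulr0 ?mul0rn ?coefMn ?coef0 ?mul0rn. Qed.

Lemma phiC (p : nat) (f : {poly k}) a b A d : (0 < p)%N ->
  ((cartier_AS p f (mono k a b))`_A)`_d =
  if (A <= a)%N then proot p (((-f)^+(a-A) * 'X^b)`_(p*d+p.-1)) *+ 'C(a,A) else 0.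
Proof.
move=> p0; rewrite /cartier_AS coef_sum coef_sum.
have term : forall i, ((\sum_(j < i.+1) ('C(i, j))%:R *: ((cartier_x p ((- f) ^+ (i - j) * (mono k a b)`_i))%:P * 'X^j))`_A)`_d
   = if (A <= i)%N then (cartier_x p ((- f) ^+ (i - A) * (mono k a b)`_i))`_d *+ 'C(i, A) else 0.
  move=> i; rewrite coef_sum coef_sum.
  under eq_bigr => j _ do rewrite coefZ coefCM coefXn.
  under eq_bigr => j _ do rewrite mulr_natl aux (eq_sym A j).
  rewrite -big_mkcond /= (big_ord1_eq _ (fun j => (cartier_x p ((- f) ^+ (i - j) * (mono k a b)`_i))`_d *+ 'C(i, j))).
  by rewrite ltnS.
under eq_bigr => i _ do rewrite term.
have Hi : forall i, (if (A <= i)%N then proot p (((-f)^+(i-A) * ((i==a)%:R * 'X^b))`_(p*d+p.-1)) *+ 'C(i,A) else 0)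
   = if i == a then (if (A <= a)%N then proot p (((-f)^+(a-A) * 'X^b)`_(p*d+p.-1)) *+ 'C(a,A) else 0) else 0.
  move=> i; case: eqP => [->|_]; first by rewrite mul1r.
  by rewrite mul0r mulr0 coef0 proot0 // mul0rn; case: ifP.
under eq_bigr => i _ do rewrite coef_mono coef_cartier_x // Hi.
rewrite -big_mkcond /= (big_ord1_eq _ (fun _ => (if (A <= a)%N then proot p (((-f)^+(a-A) * 'X^b)`_(p*d+p.-1)) *+ 'C(a,A) else 0))).
have -> : (a < size (mono k a b))%N.
  rewrite ltnNge; apply/negP => H; have := nth_default 0 H.
  rewrite -/((mono k a b)`_a) coef_mono eqxx mul1r.
  move/(congr1 (fun q : {poly k} => q`_b)); rewrite coefXn eqxx coef0 => /eqP; by rewrite oner_eq0.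
by [].
Qed.
Lemma coefF (D e s b E : nat) :
  ((('X^D + 'X^e : {poly k}) ^+ s * 'X^b)`_E) =
  \sum_(i < s.+1) ((E == (s - i) * D + i * e + b)%N%:R *+ 'C(s, i)).
Proof.
rewrite exprDn mulr_suml coef_sum; apply: eq_bigr => i _.
by rewrite mulrnAl coefMn -!exprM -!exprD coefXn (mulnC D) (mulnC e).
Qed.

Lemma coefF0 (D e s b E : nat) :
  (forall i, (i <= s)%N -> ((s - i) * D + i * e + b)%N <> E) ->
  ((('X^D + 'X^e : {poly k}) ^+ s * 'X^b)`_E) = 0.
Proof.
move=> H; rewrite coefF big1 // => i _.
case: eqP => [Hi|_]; last by rewrite mul0rn.
by exfalso; apply: (H i); rewrite // -ltnS.
Qed.

Lemma coefF1 (D e s b E i0 : nat) : (i0 <= s)%N ->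
  E = ((s - i0) * D + i0 * e + b)%N ->
  (forall i, (i <= s)%N -> ((s - i) * D + i * e + b)%N = E -> i = i0) ->
  ((('X^D + 'X^e : {poly k}) ^+ s * 'X^b)`_E) = ('C(s, i0))%:R.
Proof.
move=> i0s HE H.
have i0s' : (i0 < s.+1)%N by rewrite ltnS.
rewrite coefF (bigD1 (Ordinal i0s')) // big1.
  by rewrite /= -HE eqxx addr0.
move=> i ne; case: eqP => [Hi|_]; last by rewrite mul0rn.
exfalso; move/eqP: ne; apply; apply: val_inj => /=; apply: H => //; by rewrite -ltnS.
Qed.

Lemma binom_ne0 (p s i : nat) : prime p -> p \in [pchar k] -> (s < p)%N -> (i <= s)%N -> ('C(s, i))%:R != 0 :> k.
Proof.
move=> pr ch sp iS; rewrite -(dvdn_pcharf ch).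
have nf : forall t, (t < p)%N -> ~~ (p %| t`!)%N.
  elim=> [|t IH] tp; first by rewrite /= dvdn1; apply/eqP => E; move: pr; rewrite E.
  rewrite factS Euclid_dvdM // negb_or IH ?(ltnW tp) // andbT.
  by rewrite gtnNdvd.
apply/negP => H; have := nf s sp; rewrite -(bin_fact iS).
by rewrite dvdn_mulr.
Qed.
End S.
Unset Implicit Arguments. Set Strict Implicit.

Theorem mainTheorem6 (p : nat) (k : closedFieldType) :
  prime p -> odd p -> p \in [pchar k] ->
  let D := (p ^ 2).+1 in
  let f : {poly k} := - 'X^D - 'X^(D./2 + p) in
  forall m n : nat, in_basis p D m n -> (p - 1 <= 2 * m)%N ->
  ~ exists c : nat -> nat -> k,
      cartier_AS p f (mono k m n) =
      \sum_(a < p) \sum_(b < D)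
        ((if in_basis p D a b && lex_lt a b m n then c a b else 0)%:P)%:P *
          cartier_AS p f (mono k a b).
Proof.
move=> pr odp ch D f m n inb hm [c Hc].
have p0 : (0 < p)%N := prime_gt0 pr.
have p1 : (1 < p)%N := prime_gt1 pr.
have [w pw] : exists w, p = (2*w+1)%N.
  exists p./2; have := odd_double_half p; rewrite odp; lia.
have w0 : (0 < w)%N by lia.
have HD : D = (4*w*w+4*w+2)%N by rewrite /D pw; lia.
have He : (D./2 + p = 2*w*w+4*w+2)%N by rewrite HD pw; lia.
have Hp1 : (p.-1 = 2*w)%N by rewrite pw; lia.
have Hf : - f = 'X^D + 'X^(D./2 + p) by rewrite /f opprD !opprK.
have wm : (w <= m)%N by lia.
have bas : forall a b, in_basis p D a b ->
    (a <= p - 2)%N /\ ((b+2)*(2*w+1) <= (2*w+1 - a - 1) * (4*w*w+4*w+2) + 2*w)%N.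
  move=> a b /andP [H1 H2]; split => //; move: H2; rewrite leq_divRL // -HD -pw.
  have -> : forall X, (X + p - 1 = X + 2*w)%N by move=> X; lia.
  by [].
have [mp2 Hb] := bas m n inb.
have [s [i0 [d [sm i01 i0s Hn Heq]]]] := cases w m n w0 wm Hb.
have [Huniq Hbeta] := gen w m n s i0 _ _ _ w0 erefl erefl erefl wm sm i01 i0s Hn.
set A := (m - s)%N.
have Hc' := congr1 (fun G : {poly {poly k}} => (G`_A)`_d) Hc.
move: Hc' => /=.
rewrite phiC // leq_subr subKn //.
have HE : (p * d + p.-1 = (s - i0) * D + i0 * (D./2 + p) + n)%N.
  by rewrite He HD Hp1 Heq pw.
rewrite Hf (coefF1 k i0s HE) //; last first.
  move=> i iS H; apply: Huniq => //; by rewrite -He -HD H HE.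
have R0 : forall G : nat -> nat -> {poly {poly k}},
  (forall a b, in_basis p D a b -> lex_lt a b m n -> ((G a b)`_A)`_d = 0) ->
  ((\sum_(a < p) \sum_(b < D)
        ((if in_basis p D a b && lex_lt a b m n then c a b else 0)%:P)%:P * G a b)`_A)`_d = 0.
  move=> G HG; rewrite coef_sum coef_sum big1 // => a _.
  rewrite coef_sum coef_sum big1 // => b _.
  rewrite coefCM coefCM; case: ifP => [/andP [H1 H2] | _]; last by rewrite mul0r.
  by rewrite HG ?mulr0.

have HG : forall a b, in_basis p D a b -> lex_lt a b m n ->
    ((cartier_AS p f (mono k a b))`_A)`_d = 0.
  move=> a b Hab Hlex; rewrite phiC //; case: leqP => // Aa.
  rewrite Hf coefF0 ?proot0 ?mul0rn //.
  move=> j jS E.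
  have [_ Hb2] := bas a b Hab.
  have HH : a = (m - s + (a - A))%N by rewrite /A; lia.
  apply: (Hbeta a b (a - A)%N j Hb2 Hlex HH jS).
  by rewrite Heq -He -HD E Hp1 pw.
move=> EQ.
have Z : proot p ('C(s, i0))%:R *+ 'C(m, A) = 0 :> k.
  by rewrite EQ; exact: (R0 _ HG).
move/eqP: Z; rewrite -[proot _ _ *+ _]mulr_natr mulf_eq0 => /orP [/eqP H | H].
  have sp : (s < p)%N by lia.
  have := binom_ne0 (k := k) pr ch sp i0s; by rewrite (proot_eq0 p0 H) eqxx.
have mp : (m < p)%N by lia.
have := binom_ne0 (k := k) (i := A) pr ch mp (leq_subr _ _); by rewrite H.
Qed.
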